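(* Let $P$ be a positive opetope of dimension $n$ with top face $x_n=\mathbf{m}_P$. For every maximal flag $\vec{x}$ of $P$ that is not the $\lhd$-largest one, $\mathrm{succ}(\vec{x})$ is the immediate successor of $\vec{x}$ with respect to the flag order $\lhd$ on the set of maximal flags of $P$.
   Context: A positive hypergraph $S$ consists of finite sets $S_k$ ($k\in\mathbb{N}$), only finitely many nonempty, functions $\gamma:S_{k+1}\to S_k$, and for each $k$ an assignment $\delta$ sending each $a\in S_{k+1}$ to a nonempty subset $\delta(a)\subseteq S_k$, with $\delta(a)$ a singleton for $a\in S_1$. A face is identified with its singleton; $\gamma(X)=\{\gamma(a):a\in X\}$, $\delta(X)=\bigcup_{a\in X}\delta(a)$. For $k>0$ the lower order $<^-$ on $S_k$ is the transitive closure of: $a\lhd b$ iff $\gamma(a)\in\delta(b)$. The upper order $<^+$ on $S_k$ is the transitive closure of: $a\lhd b$ iff there is $\alpha\in S_{k+1}$ with $a\in\delta(\alpha)$, $\gamma(\alpha)=b$; $a\perp^{\pm}b$ iff $a<^{\pm}b$ or $b<^{\pm}a$. A positive opetopic cardinal: $S_0\ne\emptyset$; globularity ($\gamma\gamma(a)=\gamma\delta(a)-\delta\delta(a)$, $\delta\gamma(a)=\delta\delta(a)-\gamma\delta(a)$ for $\dim a\ge2$); each $<^+$ a strict order, linear on $S_0$; for $k>0$, $\perp^-\cap\perp^+=\emptyset$ on $S_k$; for $x\in S_{k-1}$, $\{a:\gamma(a)=x\}$ and $\{a:x\in\delta(a)\}$ linearly ordered by $<^+$. A positive opetope: additionally $|P_m-\delta(P_{m+1})|\le1$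 for all $m$; if $\dim P=n$ then $P_n=\{\mathbf m_P\}$. Write $\partial(a)=\{\gamma(a)\}\cup\delta(a)$. A maximal flag is a sequence $\vec{x}=[x_n,\dots,x_0]$ with $x_n=\mathbf m_P$, $x_i\in P_i$ and $x_i\in\partial(x_{i+1})$ for $i<n$. The sign of a sequence $[x_k,\dots,x_l]$ of this kind is $1$ if $k=l$, equals $\mathrm{sgn}([x_{k-1},\dots,x_l])$ if $x_{k-1}=\gamma(x_k)$, and equals $-\mathrm{sgn}([x_{k-1},\dots,x_l])$ if $x_{k-1}\in\delta(x_k)$; $\mathrm{sgn}(\vec x)=\mathrm{sgn}([x_n,\dots,x_0])$. For $x\in P_k$, on the pencil $\{a\in P_{k+1}: x\in\partial(a)\}$ define $a\prec_x b$ iff (i) $\gamma(b)=x\in\delta(a)$, or (ii) $x\in\delta(a)\cap\delta(b)$ and $a<^+b$, or (iii) $\gamma(a)=x=\gamma(b)$ and $b<^+a$. For distinct maximal flags $\vec x,\vec y$ with $k=\min\{j:x_j\ne y_j\}$, put $\vec x\lhd\vec y$ iff $k=0$ and $y_0<^+x_0$; or $k>0$, $\mathrm{sgn}([x_{k-1},\dots,x_0])=1$ and $x_k\prec_{x_{k-1}}y_k$; or $k>0$, $\mathrm{sgn}([x_{k-1},\dots,x_0])=-1$ and $y_k\prec_{x_{k-1}}x_k$. (This is a strict linear order on maximal flags.) For a maximal flag $\vec x$ that is neither $\lhd$-first nor $\lhd$-last, its low level is $\mathrm{ll}(\vec x)=\max\{i<n-1: x_{i+1}\in\delta(x_{i+2})\}$.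 A maximal flag $\vec y$ is the $k$-th neighbour of $\vec x$ if $\vec y\ne\vec x$ and $y_i=x_i$ for all $i\ne k$. The high neighbour of $\vec x$ is its $(n-1)$-th neighbour, the low neighbour its $\mathrm{ll}(\vec x)$-th neighbour. For a non-terminal maximal flag, $\mathrm{succ}(\vec x)$ is the high neighbour of $\vec x$ if $\mathrm{sgn}(\vec x)=1$ and the low neighbour of $\vec x$ if $\mathrm{sgn}(\vec x)=-1$. *)

(* Defs.v *)
From HB Require Import structures.
From mathcomp Require Import all_boot all_order all_algebra.
Set Implicit Arguments. Unset Strict Implicit. Unset Printing Implicit Defensive.
Import GRing.Theory Num.Theory.

(* Positive hypergraphs are encoded as a finite type of faces [F] with a
   dimension function [dim] (S_k = faces of dimension k), a codomain map
   [gam] and a domain map [del].  The values of [gam]/[del] on faces of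
   dimension 0 are irrelevant junk and are never used. *)

Section Opetopes.
Variables (F : finType) (dim : F -> nat) (gam : F -> F) (del : F -> {set F}).

Definition delS (X : {set F}) : {set F} := \bigcup_(b in X) del b.

Definition bd (a : F) : {set F} := gam a |: del a.

Definition positive_hypergraph : Prop :=
  (forall a, 0 < dim a -> dim (gam a) = (dim a).-1) /\
  (forall a, 0 < dim a -> del a != set0) /\
  (forall a b, 0 < dim a -> b \in del a -> dim b = (dim a).-1) /\
  (forall a, dim a = 1 -> #|del a| = 1).

Definition lhd_minus (a b : F) : bool :=
  [&& 0 < dim a, dim a == dim b & gam a \in del b].
Definition lt_minus (a b : F) : bool :=
  [exists c, lhd_minus a c && connect lhd_minus c b].

Definition lhd_plus (a b : F) : bool :=
  [exists al, [&& dim al == (dim a).+1, a \in del al & gam al == b]].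
Definition lt_plus (a b : F) : bool :=
  [exists c, lhd_plus a c && connect lhd_plus c b].

Definition perp_minus a b := lt_minus a b || lt_minus b a.
Definition perp_plus a b := lt_plus a b || lt_plus b a.

Definition positive_opetopic_cardinal : Prop :=
  positive_hypergraph /\
  (exists a, dim a = 0) /\
  (forall a, 2 <= dim a ->
     [set gam (gam a)] = (gam @: del a) :\: delS (del a) /\
     del (gam a) = delS (del a) :\: (gam @: del a)) /\
  (forall a, ~~ lt_plus a a) /\
  (forall a b, dim a = 0 -> dim b = 0 -> a != b -> perp_plus a b) /\
  (forall a b, 0 < dim a -> dim a = dim b -> ~~ (perp_minus a b && perp_plus a b)) /\
  (forall x a b, dim a = (dim x).+1 -> dim b = (dim x).+1 ->
      gam a = x -> gam b = x -> a != b -> perp_plus a b) /\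
  (forall x a b, dim a = (dim x).+1 -> dim b = (dim x).+1 ->
      x \in del a -> x \in del b -> a != b -> perp_plus a b).

Definition positive_opetope : Prop :=
  positive_opetopic_cardinal /\
  (forall m, #|[set a | (dim a == m) &&
                 ~~ [exists b, (dim b == m.+1) && (a \in del b)]]| <= 1) /\
  (forall a b, (forall c, dim c <= dim a) -> dim b = dim a -> b = a).

Variable top : F.
Local Notation n := (dim top).

Definition flag := {ffun 'I_n.+1 -> F}.

Definition fa (x : flag) (i : nat) : F := x (inord i).

Definition max_flag (x : flag) : Prop :=
  fa x n = top /\
  (forall i, i <= n -> dim (fa x i) = i) /\
  (forall i, i < n -> fa x i \in bd (fa x i.+1)).

(* sgnrec x l d = sgn([x_{l+d}, ..., x_l]) *)
Fixpoint sgnrec (x : flag) (l d : nat) : int :=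
  match d with
  | 0 => 1%R
  | d'.+1 => if fa x (l + d') == gam (fa x (l + d').+1)
             then sgnrec x l d' else (- sgnrec x l d')%R
  end.

Definition sgn_seg (x : flag) (k : nat) : int := sgnrec x 0 k.
Definition sgn (x : flag) : int := sgn_seg x n.

Definition pencil_lt (x a b : F) : bool :=
  [|| (gam b == x) && (x \in del a),
      [&& x \in del a, x \in del b & lt_plus a b] |
      [&& gam a == x, gam b == x & lt_plus b a]].

Definition flag_lt (x y : flag) : bool :=
  [exists k : 'I_n.+1,
    [&& [forall j : 'I_n.+1, (j < k) ==> (x j == y j)],
        x k != y k &
        if k == 0 :> nat then lt_plus (y k) (x k)
        else ((sgn_seg x k.-1 == 1%R) && pencil_lt (fa x k.-1) (x k) (y k))
          || ((sgn_seg x k.-1 == (-1)%R) && pencil_lt (fa x k.-1) (y k) (x k))]].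

Definition flag_largest (x : flag) : Prop :=
  forall y, max_flag y -> y = x \/ flag_lt y x.

Definition immediate_successor (x y : flag) : Prop :=
  max_flag y /\ flag_lt x y /\
  ~ (exists z, max_flag z /\ flag_lt x z /\ flag_lt z y).

Definition neighbour (k : nat) (x y : flag) : Prop :=
  max_flag y /\ y <> x /\ (forall i, i <= n -> i <> k -> fa y i = fa x i).

Definition is_low_level (x : flag) (k : nat) : Prop :=
  k < n.-1 /\ fa x k.+1 \in del (fa x k.+2) /\
  (forall i, k < i -> i < n.-1 -> fa x i.+1 \notin del (fa x i.+2)).

Definition high_neighbour (x y : flag) : Prop := neighbour n.-1 x y.
Definition low_neighbour (x y : flag) : Prop :=
  exists k, is_low_level x k /\ neighbour k x y.

Definition is_succ (x y : flag) : Prop :=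
  (sgn x = 1%R /\ high_neighbour x y) \/ (sgn x = (-1)%R /\ low_neighbour x y).

End Opetopes.

(* Main.v *)
Require Import Defs.
From mathcomp Require Import all_boot all_order all_algebra.
From Stdlib Require Import ClassicalEpsilon.
From mathcomp Require Import zify.
Set Implicit Arguments. Unset Strict Implicit. Unset Printing Implicit Defensive.
Import GRing.Theory Num.Theory.

Section TC.
Variable T : finType.
Variable e : rel T.
Definition tc a b := [exists c, e a c && connect e c b].

Lemma tc_conn a b : tc a b -> connect e a b.
Proof. by case/existsP=> c /andP[h1 h2]; apply: connect_trans (connect1 h1) h2. Qed.

Lemma tc_step a b : e a b -> tc a b.
Proof. by move=> h; apply/existsP; exists b; rewrite h connect0. Qed.

Lemma tc_conn_step a c b : connect e a c -> e c b -> tc a b.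
Proof.
case/connectP=> p; elim: p a => [|a1 p IH] a /=.
  by move=> _ -> h; apply: tc_step.
case/andP=> h1 hp hl hcb; apply/existsP; exists a1; rewrite h1 /=.
exact: tc_conn (IH _ hp hl hcb).
Qed.

Lemma tc_trans a b c : tc a b -> tc b c -> tc a c.
Proof.
case/existsP=> d /andP[h1 h2] /tc_conn h3; apply/existsP; exists d.
by rewrite h1 (connect_trans h2 h3).
Qed.

Lemma tc_step_conn a b c : e a b -> connect e b c -> tc a c.
Proof. by move=> h1 h2; apply/existsP; exists b; rewrite h1. Qed.

Lemma conn_tc a b : connect e a b -> a = b \/ tc a b.
Proof.
case/connectP=> [[|a1 p]] /=; first by move=> _ ->; left.
case/andP=> h1 hp hl; right; apply/existsP; exists a1; rewrite h1 /=.
by apply/connectP; exists p.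
Qed.
End TC.

Section Ope.
Variables (F : finType) (dim : F -> nat) (gam : F -> F) (del : F -> {set F}).
Hypothesis HP : positive_opetope dim gam del.

Local Notation lhdp := (lhd_plus dim gam del).
Local Notation lhdm := (lhd_minus dim gam del).
Local Notation ltp := (lt_plus dim gam del).
Local Notation ltm := (lt_minus dim gam del).
Local Notation bd := (bd gam del).

Lemma ltpE a b : ltp a b = tc lhdp a b. Proof. by []. Qed.
Lemma ltmE a b : ltm a b = tc lhdm a b. Proof. by []. Qed.

Lemma dim_gam a : 0 < dim a -> dim (gam a) = (dim a).-1.
Proof. by case: HP => [[[H _] _] _]; apply: H. Qed.

Lemma dim_del a b : 0 < dim a -> b \in del a -> dim b = (dim a).-1.
Proof. by case: HP => [[[_ [_ [H _]]] _] _]; apply: H. Qed.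

Lemma del_dim1 a : dim a = 1 -> #|del a| = 1.
Proof. by case: HP => [[[_ [_ [_ H]]] _] _]; apply: H. Qed.

Lemma del_ne0 a : 0 < dim a -> del a != set0.
Proof. by case: HP => [[[_ [H _]] _] _]; apply: H. Qed.

Lemma glob a : 2 <= dim a ->
     [set gam (gam a)] = (gam @: del a) :\: delS del (del a) /\
     del (gam a) = delS del (del a) :\: (gam @: del a).
Proof. by case: HP => [[_ [_ [H _]]] _]; apply: H. Qed.

Lemma ltp_irr a : ~~ ltp a a.
Proof. by case: HP => [[_ [_ [_ [H _]]]] _]; apply: H. Qed.

Lemma lin0 a b : dim a = 0 -> dim b = 0 -> a != b -> perp_plus dim gam del a b.
Proof. by case: HP => [[_ [_ [_ [_ [H _]]]]] _]; apply: H. Qed.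

Lemma disj a b : 0 < dim a -> dim a = dim b ->
  ~~ (perp_minus dim gam del a b && perp_plus dim gam del a b).
Proof. by case: HP => [[_ [_ [_ [_ [_ [H _]]]]]] _]; apply: H. Qed.

Lemma pen1 x a b : dim a = (dim x).+1 -> dim b = (dim x).+1 ->
      gam a = x -> gam b = x -> a != b -> perp_plus dim gam del a b.
Proof. by case: HP => [[_ [_ [_ [_ [_ [_ [H _]]]]]]] _]; apply: H. Qed.

Lemma pen2 x a b : dim a = (dim x).+1 -> dim b = (dim x).+1 ->
      x \in del a -> x \in del b -> a != b -> perp_plus dim gam del a b.
Proof. by case: HP => [[_ [_ [_ [_ [_ [_ [_ H]]]]]]] _]; apply: H. Qed.

Lemma ltp_trans a b c : ltp a b -> ltp b c -> ltp a c.
Proof. exact: tc_trans. Qed.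

Lemma ltp_asym a b : ltp a b -> ltp b a -> False.
Proof. by move=> h1 h2; move: (ltp_irr a); rewrite (ltp_trans h1 h2). Qed.

Lemma lhdp_intro a al : dim al = (dim a).+1 -> a \in del al -> lhdp a (gam al).
Proof. by move=> h1 h2; apply/existsP; exists al; rewrite h1 h2 !eqxx. Qed.

Lemma ltp_intro a al : dim al = (dim a).+1 -> a \in del al -> ltp a (gam al).
Proof. by move=> h1 h2; apply: tc_step; apply: lhdp_intro. Qed.

Lemma ltp_del a b : 0 < dim a -> b \in del a -> ltp b (gam a).
Proof.
move=> h1 h2; apply: ltp_intro => //; rewrite (dim_del h1 h2).
by case: (dim a) h1.
Qed.

Lemma gam_notin_del b : 0 < dim b -> gam b \notin del b.
Proof.
move=> hb; apply/negP=> h; move: (ltp_irr (gam b)).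
by rewrite (ltp_del hb h).
Qed.

Lemma lhdm_plus X Y : lhdm X Y -> lhdp (gam X) (gam Y).
Proof.
case/and3P=> h0 /eqP hd hin; apply: lhdp_intro => //.
by rewrite dim_gam // -hd; case: (dim X) h0.
Qed.

Lemma connm_plus X Y : connect lhdm X Y -> connect lhdp (gam X) (gam Y).
Proof.
case/connectP=> p; elim: p X => [|X1 p IH] X /=; first by move=> _ ->.
case/andP=> h1 hp hl; apply: connect_trans (connect1 (lhdm_plus h1)) (IH _ hp hl).
Qed.

Lemma ltm_irr X : ~~ ltm X X.
Proof.
apply/negP; case/existsP=> c /andP[h1 h2]; move: (ltp_irr (gam X)).
by rewrite ltpE (tc_step_conn (lhdm_plus h1) (connm_plus h2)).
Qed.

Lemma connp_minus c e : connect lhdp c e -> forall A, gam A = c -> 0 < dim A ->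
  exists2 A', connect lhdm A A' & gam A' = e /\ dim A' = dim A.
Proof.
case/connectP=> p; elim: p c => [|c1 p IH] c /=.
  by move=> _ -> A hA hd; exists A.
case/andP=> /existsP[A1 /and3P[/eqP hd1 hin /eqP hg1]] hp hl A hA hdA.
have hdim : dim A = dim A1.
  by rewrite hd1 -hA dim_gam //; case: (dim A) hdA.
have hm : lhdm A A1 by rewrite /lhd_minus hdA hdim eqxx hA hin.
have [|A' h1 [h2 h3]] := IH _ hp hl A1 hg1; first by rewrite -hdim.
by exists A'; [apply: connect_trans (connect1 hm) h1 | rewrite h3 hdim].
Qed.

Lemma ltp_split b e : ltp b e ->
  exists A, exists2 A', [/\ b \in del A, dim A = (dim b).+1 & connect lhdm A A'] &
     gam A' = e /\ dim A' = dim A.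
Proof.
case/existsP=> c /andP[/existsP[A /and3P[/eqP hd hin /eqP hg]] hc].
have [|A' h1 h2] := connp_minus hc hg; first by rewrite hd.
by exists A, A'.
Qed.

Lemma U_ltp a b1 b2 : 0 < dim a -> b1 \in del a -> b2 \in del a -> ltp b1 b2 -> False.
Proof.
move=> ha h1 h2 hl.
have [A [A' [hA hdA hc] [hg hdA']]] := ltp_split hl.
have hdb1 : dim b1 = (dim a).-1 := dim_del ha h1.
have hdimA : dim A = dim a by rewrite hdA hdb1; case: (dim a) ha.
have hm : lhdm A' a by rewrite /lhd_minus hdA' hdimA ha eqxx hg h2.
have hlt : ltm A a by rewrite ltmE; apply: tc_conn_step hc hm.
have [eA|nA] := eqVneq A a.
  by move: (ltm_irr a); rewrite -{1}eA hlt.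
have hp : perp_plus dim gam del A a.
  by apply: (pen2 (x:=b1)) => //; rewrite hdb1; case: (dim a) ha.
move: (disj (a:=A) (b:=a)); rewrite hdimA ha hp /perp_minus hlt /=.
by move/(_ isT erefl).
Qed.

Lemma U a b1 b2 : 0 < dim a -> b1 \in del a -> b2 \in del a -> b1 != b2 ->
  perp_plus dim gam del b1 b2 -> False.
Proof.
move=> ha h1 h2 _ /orP[] h; [exact: (U_ltp ha h1 h2 h) | exact: (U_ltp ha h2 h1 h)].
Qed.

Lemma F1 a b1 b2 : 1 < dim a -> b1 \in del a -> b2 \in del a -> b1 != b2 ->
  gam b1 = gam b2 -> False.
Proof.
move=> ha h1 h2 hn hg; have ha0 : 0 < dim a by case: (dim a) ha.
have e1 := dim_del ha0 h1; have e2 := dim_del ha0 h2.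
have hb1 : 0 < dim b1 by rewrite e1; case: (dim a) ha => [|[]].
apply: (U ha0 h1 h2 hn); apply: (pen1 (x := gam b1)).
- by rewrite dim_gam //; case: (dim b1) hb1.
- by rewrite dim_gam // e2 -e1; case: (dim b1) hb1.
- by [].
- by rewrite hg.
- by [].
Qed.

Lemma F2 a b1 b2 c : 1 < dim a -> b1 \in del a -> b2 \in del a -> b1 != b2 ->
  c \in del b1 -> c \in del b2 -> False.
Proof.
move=> ha h1 h2 hn hc1 hc2; have ha0 : 0 < dim a by case: (dim a) ha.
have e1 := dim_del ha0 h1; have e2 := dim_del ha0 h2.
have hb1 : 0 < dim b1 by rewrite e1; case: (dim a) ha => [|[]].
apply: (U ha0 h1 h2 hn); apply: (pen2 (x := c)) => //.
  by rewrite (dim_del hb1 hc1); case: (dim b1) hb1.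
by rewrite (dim_del hb1 hc1) e2 -e1; case: (dim b1) hb1.
Qed.

End Ope.

Section Diamond.
Variables (F : finType) (dim : F -> nat) (gam : F -> F) (del : F -> {set F}).
Hypothesis HP : positive_opetope dim gam del.
Local Notation ltp := (lt_plus dim gam del).
Local Notation bd := (bd gam del).
Local Notation pl := (pencil_lt dim gam del).

Lemma bdE b c : (c \in bd b) = (c == gam b) || (c \in del b).
Proof. by rewrite /Defs.bd in_setU1. Qed.

Lemma delSP (X : {set F}) c : reflect (exists2 b, b \in X & c \in del b) (c \in delS del X).
Proof. exact: bigcupP. Qed.

Lemma G1 a c : 2 <= dim a ->
  (c == gam (gam a)) = (c \in gam @: del a) && (c \notin delS del (del a)).
Proof. by move=> h; rewrite -in_set1 (glob HP h).1 in_setD andbC. Qed.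

Lemma G2 a c : 2 <= dim a ->
  (c \in del (gam a)) = (c \in delS del (del a)) && (c \notin gam @: del a).
Proof. by move=> h; rewrite (glob HP h).2 in_setD andbC. Qed.

Lemma pos_dim_del a b : 1 < dim a -> b \in del a -> 0 < dim b.
Proof.
move=> ha hb; rewrite (dim_del HP _ hb); last by case: (dim a) ha.
by case: (dim a) ha => [|[]].
Qed.

Lemma pos_dim_gam a : 1 < dim a -> 0 < dim (gam a).
Proof.
move=> ha; rewrite (dim_gam HP); last by case: (dim a) ha.
by case: (dim a) ha => [|[]].
Qed.

Lemma bd_not_both b c : 0 < dim b -> c == gam b -> c \in del b -> False.
Proof. by move=> hb /eqP -> h; move: (gam_notin_del HP hb); rewrite h. Qed.

Lemma diamond_dir a b b' c : 1 < dim a -> b \in bd a -> b' \in bd a -> b != b' ->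
  c \in bd b -> c \in bd b' ->
  if (c == gam b) == (b == gam a) then pl c b b' else pl c b' b.
Proof.
move=> ha; have ha0 : 0 < dim a by case: (dim a) ha.
rewrite !bdE => hba hb'a hne hcb hcb'.
rewrite /pencil_lt.
case hb: (b == gam a).
- move/eqP: hb => eb; subst b.
  have hb' : b' \in del a by case/orP: hb'a => // /eqP e; move: hne; rewrite e eqxx.
  have hl : ltp b' (gam a) := ltp_del HP ha0 hb'.
  case hc: (c == gam (gam a)) => /=.
  + have : c \notin del b'.
      apply/negP=> hin; move: hc; rewrite G1 // => /andP[_ /negP]; apply.
      by apply/delSP; exists b'.
    move=> hn; move: hcb'; rewrite (negbTE hn) orbF => /eqP <-.
    by rewrite (eqP hc) !eqxx hl !orbT.
  + move: hcb; rewrite hc /= => hcd.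
    have hng : c \notin gam @: del a by move: hcd; rewrite G2 // => /andP[].
    have hcb'd : c \in del b'.
      case/orP: hcb' => // /eqP e; move: hng; rewrite e.
      by rewrite imset_f.
    by rewrite hcb'd hcd hl ?orbT.
- have hbd : b \in del a by case/orP: hba => //; rewrite hb.
  have hb0 : 0 < dim b := pos_dim_del ha hbd.
  case hc: (c == gam b) => /=.
  + have hcg : c \in gam @: del a by rewrite (eqP hc) imset_f.
    have hl : ltp b (gam a) := ltp_del HP ha0 hbd.
    case hb': (b' == gam a).
    * move/eqP: hb' => eb'; subst b'.
      have : c == gam (gam a).
        case/orP: hcb' => // hin; move: hin; rewrite G2 // hcg andbF //.
      by move=> /eqP e; rewrite -(eqP hc) -e eqxx hl !orbT.
    * have hb'd : b' \in del a by case/orP: hb'a => //; rewrite hb'.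
      have : c \in del b'.
        case/orP: hcb' => // /eqP e; exfalso.
        by apply: (F1 HP ha hbd hb'd hne); rewrite -e (eqP hc).
      by move=> ->; rewrite (eqP hc) eqxx.
  + have hcd : c \in del b by case/orP: hcb => //; rewrite hc.
    have hcS : c \in delS del (del a) by apply/delSP; exists b.
    case hb': (b' == gam a).
    * move/eqP: hb' => eb'; subst b'.
      have : c \in del (gam a).
        case/orP: hcb' => // e; move: e; rewrite G1 // hcS andbF //.
      by move=> ->; rewrite hcd (ltp_del HP ha0 hbd) !orbT.
    * have hb'd : b' \in del a by case/orP: hb'a => //; rewrite hb'.
      have : c == gam b'.
        case/orP: hcb' => // hin; exfalso.
        exact: (F2 HP ha hbd hb'd hne hcd hin).
      by move=> /eqP <-; rewrite eqxx hcd.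
Qed.

Lemma diamond_ex a b c : 1 < dim a -> b \in bd a -> c \in bd b ->
  exists2 b', b' \in bd a & (b' != b) && (c \in bd b').
Proof.
move=> ha; have ha0 : 0 < dim a by case: (dim a) ha.
move=> hba hcb; rewrite bdE in hba; rewrite bdE in hcb.
have hga : gam a \notin del a := gam_notin_del HP ha0.
case/orP: hba => [/eqP eb | hbd].
- subst b; case/orP: (hcb) => [/eqP ec | hcd].
  + have : c == gam (gam a) by rewrite ec.
    rewrite G1 // => /andP[/imsetP[b' hb' ->] _].
    exists b'; first by rewrite bdE hb' orbT.
    rewrite bdE eqxx andbT; apply/negP=> /eqP e; move: hga; rewrite -e hb'.
    by [].
  + move: hcd; rewrite G2 // => /andP[/delSP[b' hb' hcb'] _].
    exists b'; first by rewrite bdE hb' orbT.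
    rewrite bdE hcb' orbT andbT; apply/negP=> /eqP e; move: hga; rewrite -e hb'.
    by [].
- have hb0 : 0 < dim b := pos_dim_del ha hbd.
  case/orP: (hcb) => [/eqP ec | hcd].
  + case hS: (c \in delS del (del a)).
    * case/delSP: hS => b' hb' hcb'.
      exists b'; first by rewrite bdE hb' orbT.
      rewrite bdE hcb' orbT andbT; apply/negP=> /eqP e; subst b'.
      by move: (gam_notin_del HP hb0); rewrite -ec hcb'.
    * have : c == gam (gam a).
        by rewrite G1 // hS ec imset_f.
      move=> /eqP e; exists (gam a); first by rewrite bdE eqxx.
      rewrite bdE e eqxx andbT; apply/negP=> /eqP e2; move: hga.
      by rewrite e2 hbd.
  + have hcS : c \in delS del (del a) by apply/delSP; exists b.
    case hg: (c \in gam @: del a).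
    * case/imsetP: hg => b' hb' ec.
      exists b'; first by rewrite bdE hb' orbT.
      rewrite bdE ec eqxx andbT; apply/negP=> /eqP e; subst b'.
      by move: (gam_notin_del HP hb0); rewrite -ec hcd.
    * have : c \in del (gam a) by rewrite G2 // hcS hg.
      move=> h; exists (gam a); first by rewrite bdE eqxx.
      rewrite bdE h orbT andbT; apply/negP=> /eqP e2; move: hga.
      by rewrite e2 hbd.
Qed.

Lemma types_del a b b' c : 1 < dim a -> b \in del a -> b' \in del a -> b != b' ->
  c \in bd b -> c \in bd b' -> (c == gam b) != (c == gam b').
Proof.
move=> ha hb hb' hne; rewrite !bdE.
case e1: (c == gam b); case e2: (c == gam b') => //= h1 h2.
- by exfalso; apply: (F1 HP ha hb hb' hne); rewrite -(eqP e1) -(eqP e2).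
- by exfalso; apply: (F2 HP ha hb hb' hne h1 h2).
Qed.

Lemma types_gam a b' c : 1 < dim a -> b' \in del a ->
  c \in bd (gam a) -> c \in bd b' -> (c == gam b') = (c == gam (gam a)).
Proof.
move=> ha hb'; rewrite !bdE => hc hc'.
case e: (c == gam (gam a)).
- move: (e); rewrite G1 // => /andP[_ hnS].
  case/orP: hc' => // hin; move/negP: hnS; case; apply/delSP; exists b' => //.
- move: hc; rewrite e /= G2 // => /andP[_ hng].
  apply/negP=> /eqP ec; move/negP: hng; apply; by rewrite ec imset_f.
Qed.

Lemma AM2 a b1 b2 b3 c : 1 < dim a -> b1 \in bd a -> b2 \in bd a -> b3 \in bd a ->
  b1 != b2 -> b1 != b3 -> b2 != b3 ->
  c \in bd b1 -> c \in bd b2 -> c \in bd b3 -> False.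
Proof.
move=> ha h1 h2 h3 n12 n13 n23 c1 c2 c3.
have key : forall u v w, u \in bd a -> v \in del a -> w \in del a -> u != v -> u != w -> v != w ->
  c \in bd u -> c \in bd v -> c \in bd w -> False.
  move=> u v w hu hv hw nuv nuw nvw cu cv cw.
  have t := types_del ha hv hw nvw cv cw.
  move: hu; rewrite bdE => /orP[/eqP eu | hu].
  - subst u; move: t; rewrite (types_gam ha hv cu cv) (types_gam ha hw cu cw).
    by rewrite eqxx.
  - move: (types_del ha hu hv nuv cu cv) (types_del ha hu hw nuw cu cw) t.
    by case: (c == gam u); case: (c == gam v); case: (c == gam w).
have hga : forall u, u \in del a -> u != gam a.
  move=> u hu; apply/negP=> /eqP e; move: (gam_notin_del HP (ltnW ha)).
  by rewrite -e hu.
move: (h1) (h2) (h3); rewrite !bdE.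
case/orP=> [/eqP e1 | d1]; case/orP=> [/eqP e2 | d2]; case/orP=> [/eqP e3 | d3].
- by move: n12; rewrite e1 e2 eqxx.
- by move: n12; rewrite e1 e2 eqxx.
- by move: n13; rewrite e1 e3 eqxx.
- exact: (key b1 b2 b3).
- by move: n23; rewrite e2 e3 eqxx.
- by apply: (key b2 b1 b3) => //; rewrite eq_sym.
- by apply: (key b3 b1 b2) => //; rewrite eq_sym.
- by apply: (key b1 b2 b3) => //; rewrite bdE d1 orbT.
Qed.

Lemma bd_dim1 a u v w : dim a = 1 -> u \in bd a -> v \in bd a -> w \in bd a ->
  u != v -> u != w -> v != w -> False.
Proof.
move=> ha; have [d hd] := cards1P (introT eqP (del_dim1 HP ha)).
rewrite !bdE hd !in_set1.
by case/orP=> /eqP ->; case/orP=> /eqP ->; case/orP=> /eqP ->; rewrite ?eqxx.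
Qed.

End Diamond.

Section Flags.
Variables (F : finType) (dim : F -> nat) (gam : F -> F) (del : F -> {set F}).
Hypothesis HP : positive_opetope dim gam del.
Variable top : F.
Hypothesis Htop : forall c, dim c <= dim top.
Local Notation n := (dim top).
Local Notation ltp := (lt_plus dim gam del).
Local Notation bd := (bd gam del).
Local Notation pl := (pencil_lt dim gam del).
Local Notation flag := (flag dim top).
Local Notation mf := (max_flag gam del).
Local Notation flt := (flag_lt gam del).
Local Notation sgs := (sgn_seg gam).
Local Notation nb := (neighbour gam del).
Implicit Types x y z : flag.

Lemma faE (x : flag) (j : 'I_n.+1) : x j = fa x j.
Proof. by rewrite /fa inord_val. Qed.

Lemma flag_ext (x y : flag) : (forall i, i <= n -> fa x i = fa y i) -> x = y.
Proof. by move=> h; apply/ffunP=> j; rewrite !faE h // -ltnS. Qed.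

Lemma mf_top x : mf x -> fa x n = top. Proof. by case. Qed.
Lemma mf_dim x i : mf x -> i <= n -> dim (fa x i) = i. Proof. by case=> _ [h _]; apply: h. Qed.
Lemma mf_bd x i : mf x -> i < n -> fa x i \in bd (fa x i.+1). Proof. by case=> _ [_ h]; apply: h. Qed.

Definition pos (x : flag) j := fa x j == gam (fa x j.+1).

Lemma sgsS x d : sgs x d.+1 = if pos x d then sgs x d else (- sgs x d)%R.
Proof. by []. Qed.

Lemma sgs0 x : sgs x 0 = 1. Proof. by []. Qed.

Lemma sgs_pm x d : sgs x d = 1%R \/ sgs x d = (-1)%R.
Proof.
elim: d => [|d IH]; first by left.
rewrite sgsS; case: (pos x d); case: IH => ->; by [left|right|right; rewrite opprK|left; rewrite opprK].
Qed.

Lemma sgs_eq x y d : (forall i, i <= d -> fa x i = fa y i) -> sgs x d = sgs y d.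
Proof.
elim: d => [|d IH] h //; rewrite !sgsS IH; last by move=> i hi; apply: h; apply: leqW.
by rewrite /pos !h // leqW.
Qed.

Definition Cnd (x y : flag) (k : nat) : bool :=
  if k == 0 then ltp (fa y k) (fa x k)
  else ((sgs x k.-1 == 1%R) && pl (fa x k.-1) (fa x k) (fa y k))
    || ((sgs x k.-1 == (-1)%R) && pl (fa x k.-1) (fa y k) (fa x k)).

Lemma flag_ltP x y : flt x y <->
  exists k, [/\ k <= n, (forall j, j < k -> fa x j = fa y j), fa x k != fa y k & Cnd x y k].
Proof.
split.
- case/existsP=> k /and3P[/forallP hj hne hc]; exists k; split.
  + by rewrite -ltnS.
  + move=> j hjk; have hjn : j < n.+1 := ltn_trans hjk (ltn_ord k).
    by move: (hj (Ordinal hjn)); rewrite /= hjk /= => /eqP; rewrite !faE.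
  + by rewrite -!faE.
  + by move: hc; rewrite /Cnd -!faE.
- case=> k [hk hj hne hc]; apply/existsP; exists (inord k).
  have hk' : k < n.+1 by [].
  rewrite inordK //; apply/and3P; split.
  + apply/forallP=> j; apply/implyP=> hjk; rewrite !faE; apply/eqP; exact: hj.
  + exact: hne.
  + exact: hc.
Qed.

Lemma flt_irr x : ~ flt x x.
Proof. by case/flag_ltP=> k [_ _]; rewrite eqxx. Qed.

Lemma pl_asym c a b : 0 < dim a -> 0 < dim b -> pl c a b -> pl c b a -> False.
Proof.
move=> ha hb; rewrite /pencil_lt.
have Fa := bd_not_both HP ha (c := c); have Fb := bd_not_both HP hb (c := c).
case/or3P=> [/andP[/eqP e1 h1]|/and3P[h1 h2 h3]|/and3P[/eqP e1 /eqP e2 h3]];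
  case/or3P=> [/andP[/eqP f1 g1]|/and3P[g1 g2 g3]|/and3P[/eqP f1 /eqP f2 g3]].
all: try by apply: Fa; rewrite ?e1 ?f1 ?e2 ?f2 ?eqxx.
all: try by apply: Fb; rewrite ?e1 ?f1 ?e2 ?f2 ?eqxx.
- exact: (ltp_asym HP h3 g3).
- exact: (ltp_asym HP h3 g3).
Qed.

Lemma pl_trans c a b d : 0 < dim b -> pl c a b -> pl c b d -> pl c a d.
Proof.
move=> hb; rewrite /pencil_lt.
have Fb := bd_not_both HP hb (c := c).
case/or3P=> [/andP[/eqP e1 h1]|/and3P[h1 h2 h3]|/and3P[/eqP e1 /eqP e2 h3]];
  case/or3P=> [/andP[/eqP f1 g1]|/and3P[g1 g2 g3]|/and3P[/eqP f1 /eqP f2 g3]].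
all: try by exfalso; apply: Fb; rewrite ?e1 ?f1 ?e2 ?f2 ?eqxx.
- by rewrite f2 eqxx h1.
- by rewrite f1 eqxx h1.
- by rewrite h1 g2 (ltp_trans h3 g3) orbT.
- by rewrite e1 f2 eqxx (ltp_trans g3 h3) !orbT.
Qed.

Lemma pl_total c a b : a != b -> c \in bd a -> c \in bd b ->
  dim a = (dim c).+1 -> dim b = (dim c).+1 -> pl c a b || pl c b a.
Proof.
move=> hne ha hb da db; rewrite bdE in ha; rewrite bdE in hb; rewrite /pencil_lt.
case/orP: ha => [/eqP ea | ha]; case/orP: hb => [/eqP eb | hb].
- case/orP: (pen1 HP da db (esym ea) (esym eb) hne) => h.
  + by rewrite -ea -eb eqxx h !orbT.
  + by rewrite -ea -eb eqxx h !orbT.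
- by rewrite -ea eqxx hb !orbT.
- by rewrite -eb eqxx ha.
- case/orP: (pen2 HP da db ha hb hne) => h.
  + by rewrite ha hb h !orbT.
  + by rewrite ha hb h !orbT.
Qed.

Lemma Cnd_asym x y k : mf x -> mf y -> k <= n -> (forall j, j < k -> fa x j = fa y j) ->
  Cnd x y k -> Cnd y x k -> False.
Proof.
move=> hx hy hk hj; rewrite /Cnd; case: eqP => [->|/eqP k0].
  by move=> h1 h2; apply: (ltp_asym HP h1 h2).
have hdx : 0 < dim (fa x k) by rewrite (mf_dim hx hk) lt0n.
have hdy : 0 < dim (fa y k) by rewrite (mf_dim hy hk) lt0n.
have hkk : k.-1 < k by rewrite prednK // lt0n.
rewrite (sgs_eq (x := y) (y := x) (d := k.-1)); last first.
  by move=> i hi; rewrite hj // (leq_ltn_trans hi hkk).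
rewrite (hj _ hkk).
case: (sgs_pm x k.-1) => -> /=; rewrite ?andbF ?orbF //=.
- by move=> h1 h2; apply: (pl_asym hdx hdy h1 h2).
- by move=> h1 h2; apply: (pl_asym hdy hdx h1 h2).
Qed.

Lemma flt_asym x y : mf x -> mf y -> flt x y -> flt y x -> False.
Proof.
move=> hx hy /flag_ltP[k1 [hk1 hj1 hn1 hc1]] /flag_ltP[k2 [hk2 hj2 hn2 hc2]].
case: (ltngtP k1 k2) => h.
- by move: hn1; rewrite (hj2 _ h) eqxx.
- by move: hn2; rewrite (hj1 _ h) eqxx.
- subst k2; exact: (Cnd_asym hx hy hk1 hj1 hc1 hc2).
Qed.

Lemma flt_trans x y z : mf x -> mf y -> mf z -> flt x y -> flt y z -> flt x z.
Proof.
move=> hx hy hz /flag_ltP[k1 [hk1 hj1 hn1 hc1]] /flag_ltP[k2 [hk2 hj2 hn2 hc2]].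
apply/flag_ltP.
case: (ltngtP k1 k2) => h.
- exists k1; split => //.
  + by move=> j hj; rewrite hj1 // hj2 // (ltn_trans hj h).
  + by rewrite -(hj2 _ h).
  + by move: hc1; rewrite /Cnd (hj2 _ h).
- exists k2; split => //.
  + by move=> j hj; rewrite hj1 ?hj2 // (ltn_trans hj h).
  + by rewrite (hj1 _ h).
  + move: hc2; rewrite /Cnd (hj1 _ h).
    case: eqP => // /eqP k0.
    have hkk : k2.-1 < k2 by rewrite prednK // lt0n.
    rewrite (hj1 _ (ltn_trans hkk h)) (sgs_eq (x := y) (y := x) (d := k2.-1)) //.
    by move=> i hi; rewrite hj1 // (leq_ltn_trans hi (ltn_trans hkk h)).
- subst k2; exists k1.
  have hjxz : forall j, j < k1 -> fa x j = fa z j by move=> j hj; rewrite hj1 ?hj2.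
  have hne : fa x k1 != fa z k1.
    apply/negP=> /eqP e; apply: (Cnd_asym hx hy hk1 hj1 hc1).
    by move: hc2; rewrite /Cnd -e.
  split => //.
  move: hc1 hc2; rewrite /Cnd; case: eqP => [->|/eqP k0].
    by move=> h1 h2; apply: ltp_trans h2 h1.
  have hkk : k1.-1 < k1 by rewrite prednK // lt0n.
  rewrite (sgs_eq (x := y) (y := x) (d := k1.-1)); last first.
    by move=> i hi; rewrite hj1 // (leq_ltn_trans hi hkk).
  rewrite (hj1 _ hkk).
  have hdy : 0 < dim (fa y k1) by rewrite (mf_dim hy hk1) lt0n.
  case: (sgs_pm x k1.-1) => -> /=; rewrite ?andbF ?orbF //=.
  + by move=> h1 h2; apply: (pl_trans hdy h1 h2).
  + by move=> h1 h2; apply: (pl_trans hdy h2 h1).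
Qed.

Lemma flt_total x y : mf x -> mf y -> x <> y -> flt x y \/ flt y x.
Proof.
move=> hx hy hxy.
pose P k := (k <= n) && (fa x k != fa y k).
have hex : exists k, P k.
  case: (boolP [exists k : 'I_n.+1, P k]) => [/existsP [k hk] | /existsPn hn].
    by exists k.
  exfalso; apply: hxy; apply/ffunP=> i; rewrite !faE.
  by move: (hn i); rewrite /P -ltnS ltn_ord /= negbK => /eqP.
case: (ex_minnP hex) => k /andP[hk hne] hmin.
have hj : forall j, j < k -> fa x j = fa y j.
  move=> j hjk; apply/eqP; apply/negPn/negP=> h.
  by move: (hmin j); rewrite /P h (leq_trans (ltnW hjk) hk) leqNgt hjk => /(_ isT).
case: k hk hne hmin hj => [|k] hk hne _ hj.
  have := lin0 HP (mf_dim hx (leq0n _)) (mf_dim hy (leq0n _)) hne.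
  case/orP=> h.
  - by right; apply/flag_ltP; exists 0; split => //; rewrite eq_sym.
  - by left; apply/flag_ltP; exists 0; split.
have hkn : k < n by [].
have hc := hj k (ltnSn k).
have hb1 : fa x k \in bd (fa x k.+1) := mf_bd hx hkn.
have hb2 : fa y k \in bd (fa y k.+1) := mf_bd hy hkn.
rewrite -hc in hb2.
have := pl_total hne hb1 hb2.
rewrite (mf_dim hx hk) (mf_dim hy hk) (mf_dim hx (ltnW hkn)) => /(_ erefl erefl).
have hsg : sgs y k = sgs x k.
  by apply: sgs_eq => i hi; rewrite hj // ltnS.
case: (sgs_pm x k) => hs; case/orP=> h.
- by left; apply/flag_ltP; exists k.+1; split => //; rewrite /Cnd /= hs h.
- right; apply/flag_ltP; exists k.+1; split => //.
    by move=> j hjk; rewrite hj.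
  by rewrite eq_sym.
  by rewrite /Cnd /= hsg hs -hc h.
- right; apply/flag_ltP; exists k.+1; split => //.
    by move=> j hjk; rewrite hj.
  by rewrite eq_sym.
  by rewrite /Cnd /= hsg hs -hc h orbT.
- by left; apply/flag_ltP; exists k.+1; split => //; rewrite /Cnd /= hs h orbT.
Qed.

Lemma nb_lt_n k x y : mf x -> nb k x y -> k < n.
Proof.
move=> hx [hy [hne he]]; rewrite ltnNge; apply/negP=> hk; apply: hne.
apply: flag_ext => i hi; have [eik|nik] := eqVneq i k.
  have ein : i = n by apply/eqP; rewrite eqn_leq hi eik hk.
  by rewrite ein (mf_top hx) (mf_top hy).
by apply: he => //; apply/eqP.
Qed.

Lemma nb_ne k x y : nb k x y -> fa y k != fa x k.
Proof.
move=> [hy [hne he]]; apply/negP=> /eqP e; apply: hne; apply: flag_ext => i hi.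
by have [->|/eqP nik] := eqVneq i k; [|apply: he].
Qed.

Lemma nb_sym k x y : mf x -> nb k x y -> nb k y x.
Proof.
move=> hx [hy [hne he]]; split => //; split; first by move=> e; apply: hne.
by move=> i hi hik; rewrite he.
Qed.

Lemma NB_lt k x y : mf x -> nb k x y ->
  (sgs x k.+1 = 1%R -> flt x y) /\ (sgs x k.+1 = (-1)%R -> flt y x).
Proof.
move=> hx hnb; have hkn := nb_lt_n hx hnb.
have hne := nb_ne hnb; rewrite eq_sym in hne.
case: (hnb) => hy [_ he].
have hj : forall j, j < k -> fa x j = fa y j.
  by move=> j hjk; rewrite he // ?(leq_trans (ltnW hjk) (ltnW hkn)) //; move=> e; move: hjk; rewrite e ltnn.
have hjy : forall j, j < k -> fa y j = fa x j by move=> j hjk; rewrite hj.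
have hk1 : fa y k.+1 = fa x k.+1 by apply: he => //; apply/eqP; rewrite neq_ltn ltnSn orbT.
have hb1 : fa x k \in bd (fa x k.+1) := mf_bd hx hkn.
have hb2 : fa y k \in bd (fa x k.+1) by rewrite -hk1; apply: mf_bd hy hkn.
case: k hnb he hkn hne hj hjy hk1 hb1 hb2 => [|k] hnb he hkn hne hj hjy hk1 hb1 hb2.
- have hd1 : dim (fa x 1) = 1 := mf_dim hx hkn.
  have [d hd] := cards1P (introT eqP (del_dim1 HP hd1)).
  move: hb1 hb2; rewrite !bdE hd !in_set1 => hb1 hb2.
  rewrite sgsS /pos sgs0.
  case e0: (fa x 0 == gam (fa x 1)); split => // _.
  + have ey : fa y 0 = d.
      case/orP: hb2 => /eqP e //; move: hne; rewrite e (eqP e0) eqxx //.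
    apply/flag_ltP; exists 0; split => //; rewrite /Cnd /= (eqP e0) ey.
    by apply: (ltp_del HP); [rewrite hd1 | rewrite hd in_set1].
  + have ex0 : fa x 0 = d by case/orP: hb1 => [e|/eqP //]; rewrite e in e0.
    have ey : fa y 0 = gam (fa x 1).
      case/orP: hb2 => /eqP e //; move: hne; rewrite e ex0 eqxx //.
    apply/flag_ltP; exists 0; split => //; first by rewrite eq_sym.
    rewrite /Cnd /= ey ex0.
    by apply: (ltp_del HP); [rewrite hd1 | rewrite hd in_set1].
- have ha2 : 1 < dim (fa x k.+2) by rewrite (mf_dim hx hkn).
  have hc1 : fa x k \in bd (fa x k.+1) := mf_bd hx (ltnW hkn).
  have hc2 : fa x k \in bd (fa y k.+1).
    by rewrite (hj k (ltnSn k)); apply: mf_bd hy (ltnW hkn).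
  have dd := diamond_dir HP ha2 hb1 hb2 hne hc1 hc2.
  have hsg : sgs y k = sgs x k by apply: sgs_eq => i hi; rewrite hjy // ltnS.
  have hcy : fa y k = fa x k by rewrite hjy.
  move: dd; rewrite !sgsS /pos.
  case: (sgs_pm x k) => hs; rewrite hs.
  all: case: (fa x k == gam (fa x k.+1)); case: (fa x k.+1 == gam (fa x k.+2)) => /= dd.
  all: split => //= hS.
  all: apply/flag_ltP; exists k.+1; split => //;
       rewrite ?(eq_sym (fa y k.+1)) ?hne //; rewrite /Cnd /= ?hsg ?hcy ?hs ?dd ?orbT //.
all: exact: ltnW hkn.
Qed.


Lemma nb_flip k x y : mf x -> nb k x y -> sgs y n = (- sgs x n)%R.
Proof.
move=> hx hnb; have hkn := nb_lt_n hx hnb.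
have hy : mf y by case: hnb.
have hnb' := nb_sym hx hnb.
have [h1 h2] := NB_lt hx hnb; have [h3 h4] := NB_lt hy hnb'.
have base : sgs y k.+1 = (- sgs x k.+1)%R.
  case: (sgs_pm x k.+1) => ex; case: (sgs_pm y k.+1) => ey; rewrite ex ey //.
  - by exfalso; apply: (flt_asym hx hy (h1 ex) (h3 ey)).
  - by exfalso; apply: (flt_asym hx hy (h4 ey) (h2 ex)).
case: hnb => _ [_ he].
have step : forall m, k.+1 + m <= n -> sgs y (k.+1 + m) = (- sgs x (k.+1 + m))%R.
  elim=> [|m IH]; first by rewrite addn0.
  move=> hm; rewrite addnS (sgsS y (k.+1 + m)) (sgsS x (k.+1 + m)) IH ?(leq_trans _ hm) ?leq_add2l //.
  have e1 : fa y (k.+1 + m) = fa x (k.+1 + m).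
    apply: he; first by rewrite (leq_trans _ hm) // leq_add2l.
    by move=> e; lia.
  have e2 : fa y (k.+1 + m).+1 = fa x (k.+1 + m).+1.
    apply: he; first by rewrite -addnS.
    by move=> e; lia.
  by rewrite /pos e1 e2; case: (_ == _); rewrite ?opprK.
by have := step (n - k.+1); rewrite subnKC // leqnn; apply.
Qed.

Lemma dim_bd a b : 0 < dim a -> b \in bd a -> dim b = (dim a).-1.
Proof.
move=> ha; rewrite bdE => /orP[/eqP ->|h]; first by have := dim_gam HP ha.
by have := dim_del HP ha h.
Qed.

Lemma mk_nb k x b : mf x -> k < n -> b != fa x k -> b \in bd (fa x k.+1) ->
  (0 < k -> fa x k.-1 \in bd b) -> exists y, nb k x y.
Proof.
move=> hx hkn hne hb hc.
pose y : flag := [ffun i : 'I_n.+1 => if (i : nat) == k then b else x i].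
have fy : forall i, i <= n -> fa y i = if i == k then b else fa x i.
  by move=> i hi; rewrite /fa ffunE inordK.
have hdb : dim b = k.
  by rewrite (dim_bd _ hb) (mf_dim hx hkn).
exists y; split; last split.
- split; last split.
  + by rewrite fy // (gtn_eqF hkn) (mf_top hx).
  + by move=> i hi; rewrite fy //; case: eqP => [->|_] //; apply: mf_dim.
  + move=> i hi; rewrite !fy ?(ltnW hi) //.
    case: (eqVneq i k) => [ei|ni].
      by subst i; rewrite (gtn_eqF (ltnSn k)).
    case: (eqVneq i.+1 k) => [ei1|ni1].
      by move: hc; rewrite -ei1 /=; apply.
    by apply: mf_bd.
- move=> e; move: (fy k (ltnW hkn)); rewrite eqxx e => h.
  by rewrite h eqxx in hne.
- by move=> i hi hik; rewrite fy //; case: eqP.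
Qed.

Lemma exist_nb k x : mf x -> k < n -> exists y, nb k x y.
Proof.
move=> hx hkn.
have hb := mf_bd hx hkn.
case: k hkn hb => [|k] hkn hb.
- have hd1 : dim (fa x 1) = 1 := mf_dim hx hkn.
  have [d hd] := cards1P (introT eqP (del_dim1 HP hd1)).
  have hgd : gam (fa x 1) != d.
    apply/negP=> /eqP e; have := gam_notin_del HP (b := fa x 1).
    by rewrite hd1 e hd set11 => /(_ isT).
  move: (hb); rewrite bdE hd in_set1 => /orP[/eqP e|/eqP e].
  + apply: (mk_nb (b := d)) => //; first by rewrite e eq_sym.
    by rewrite bdE hd set11 orbT.
  + apply: (mk_nb (b := gam (fa x 1))) => //; first by rewrite e.
    by rewrite bdE eqxx.
- have ha : 1 < dim (fa x k.+2) by rewrite (mf_dim hx hkn).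
  have hc : fa x k \in bd (fa x k.+1) := mf_bd hx (ltnW hkn).
  have [b' hb' /andP[hne hcb']] := diamond_ex HP ha hb hc.
  by apply: (mk_nb (b := b')).
Qed.


Local Notation isl := (is_low_level del).
Local Notation iss := (is_succ gam del).

Lemma same_level k x x' y : mf x -> mf x' -> nb k x y -> nb k x' y -> x = x'.
Proof.
move=> hx hx' h1 h2; have hkn := nb_lt_n hx h1.
have n1 := nb_ne h1; have n2 := nb_ne h2.
case: (h1) => hy [_ he1]; case: (h2) => _ [_ he2].
apply: flag_ext => i hi; have [eik|nik] := eqVneq i k; last first.
  by rewrite -he1 ?he2 //; apply/eqP.
subst i; apply/eqP/negPn/negP => n12.
have ek1 : forall z, nb k z y -> fa z k.+1 = fa y k.+1.
  by move=> z [_ [_ he]]; rewrite he //; apply/eqP; rewrite gtn_eqF.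
have hb : forall z, mf z -> nb k z y -> fa z k \in bd (fa y k.+1).
  by move=> z hz hn; rewrite -(ek1 z hn); apply: mf_bd.
have hy1 := mf_bd hy hkn.
case: k hi hkn h1 h2 n1 n2 he1 he2 ek1 hb hy1 n12 => [|k] hi hkn h1 h2 n1 n2 he1 he2 ek1 hb hy1 n12.
- apply: (bd_dim1 HP (mf_dim hy hkn) hy1 (hb _ hx h1) (hb _ hx' h2)) => //.
- have ha : 1 < dim (fa y k.+2) by rewrite (mf_dim hy hkn).
  have hc : forall z, mf z -> nb k.+1 z y -> fa y k \in bd (fa z k.+1).
    move=> z hz [_ [_ he]]; rewrite he; first exact: mf_bd hz (ltnW hkn).
      by lia.
    by lia.
  apply: (AM2 HP (c := fa y k) ha hy1 (hb _ hx h1) (hb _ hx' h2)) => //.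
  + exact: mf_bd hy (ltnW hkn).
  + exact: hc.
  + exact: hc.
Qed.

Lemma low_levels_eq k k' x x' y : isl x k -> isl x' k' -> nb k x y -> nb k' x' y -> k = k'.
Proof.
have gen : forall k k' x x', isl x k -> isl x' k' -> nb k x y -> nb k' x' y -> k < k' -> False.
  move=> {k k' x x'} k k' x x' [hk1 [hk2 hk3]] [hk1' [hk2' hk3']] [_ [_ he]] [_ [_ he']] hlt.
  have e1 : fa x' k'.+1 = fa x k'.+1.
    rewrite -he' ?he //; try lia.
  have e2 : fa x' k'.+2 = fa x k'.+2.
    rewrite -he' ?he //; try lia.
  by move: (hk3 k' hlt hk1'); rewrite -e1 -e2 hk2'.
move=> h1 h2 h3 h4; case: (ltngtP k k') => // hlt.
- by exfalso; apply: (gen k k' x x').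
- by exfalso; apply: (gen k' k x' x).
Qed.

Lemma low_sign k x : mf x -> isl x k -> sgs x n = (- sgs x k.+1)%R.
Proof.
move=> hx [hk1 [hk2 hk3]].
have hn : k.+2 <= n by lia.
have hp1 : pos x k.+1 = false.
  apply/negP=> /eqP e; have := gam_notin_del HP (b := fa x k.+2).
  by rewrite (mf_dim hx hn) -e hk2 => /(_ isT).
have step : forall m, k.+2 + m <= n -> sgs x (k.+2 + m) = (- sgs x k.+1)%R.
  elim=> [|m IH] hm; first by rewrite addn0 (sgsS x k.+1) hp1.
  rewrite addnS (sgsS x (k.+2 + m)) IH; last by lia.
  suff -> : pos x (k.+2 + m) by [].
  have : fa x (k.+2 + m) \in bd (fa x (k.+2 + m).+1) by apply: mf_bd hx _; lia.
  rewrite bdE => /orP[] // hin.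
  have := hk3 (k.+1 + m) ltac:(lia) ltac:(lia).
  by move/negP => /(_ hin).
by have := step (n - k.+2); rewrite subnKC // leqnn; apply.
Qed.


Lemma succ_props x y : mf x -> iss x y -> mf y /\ flt x y.
Proof.
move=> hx [[hs hnb]|[hs [k [hl hnb]]]]; split; try by case: hnb.
- have hkn := nb_lt_n hx hnb.
  apply: (NB_lt hx hnb).1; rewrite prednK; first exact: hs.
  by case: (dim top) hkn.
- apply: (NB_lt hx hnb).1.
  have := low_sign hx hl; rewrite /sgn in hs; rewrite hs => /eqP.
  by rewrite eqr_opp => /eqP <-.
Qed.

Lemma succ_inj x x' y : mf x -> mf x' -> iss x y -> iss x' y -> x = x'.
Proof.
move=> hx hx' [[hs hnb]|[hs [k [hl hnb]]]] [[hs' hnb']|[hs' [k' [hl' hnb']]]].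
- exact: (same_level hx hx' hnb hnb').
- exfalso; have := nb_flip hx hnb; rewrite (nb_flip hx' hnb').
  rewrite /sgn in hs hs'; by rewrite hs hs' => /eqP.
- exfalso; have := nb_flip hx hnb; rewrite (nb_flip hx' hnb').
  rewrite /sgn in hs hs'; by rewrite hs hs' => /eqP.
- have ek := low_levels_eq hl hl' hnb hnb'; subst k'.
  exact: (same_level hx hx' hnb hnb').
Qed.

Definition Lshape x := [/\ 0 < n, (forall j, 0 < j -> j < n -> fa x j = gam (fa x j.+1))
  & fa x 0 \in del (fa x 1)].

Lemma no_ll x : mf x -> sgs x n = (-1)%R -> (forall k, ~ isl x k) -> Lshape x.
Proof.
move=> hx hs hno.
have hn : 0 < n by case: (dim top) hs.
have A : forall i, i < n.-1 -> fa x i.+1 \notin del (fa x i.+2).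
  move=> i hi; apply/negP=> hin.
  pose P i := (i < n.-1) && (fa x i.+1 \in del (fa x i.+2)).
  have hex : exists i, P i by exists i; rewrite /P hi hin.
  have hbd : forall i, P i -> i <= n by move=> j /andP[hj _]; lia.
  case: (ex_maxnP hex hbd) => m /andP[hm hmin] hmax.
  apply: (hno m); split; first done; split; first done.
  move=> j hjm hjn; apply/negP=> hj.
  by have := hmax j; rewrite /P hjn hj => /(_ isT); lia.
have B : forall j, 0 < j -> j < n -> fa x j = gam (fa x j.+1).
  move=> j hj0 hjn; have := mf_bd hx hjn; rewrite bdE => /orP[/eqP //|hin].
  have := A j.-1; rewrite prednK //; move=> /(_ ltac:(lia)).
  by rewrite hin.
have C : forall m, 1 + m <= n -> sgs x (1 + m) = sgs x 1.
  elim=> [|m IH] hm //; rewrite addnS (sgsS x (1 + m)) IH; last by lia.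
  by rewrite /pos (B (1 + m)) ?eqxx //; lia.
have := C (n - 1); rewrite subnKC // => /(_ (leqnn _)); rewrite hs sgsS sgs0 /pos.
case: eqP => // hne _; split => //.
have := mf_bd hx hn; rewrite bdE => /orP[/eqP e|//].
by exfalso; apply: hne.
Qed.

Lemma Lshape_uniq x x' : mf x -> mf x' -> Lshape x -> Lshape x' -> x = x'.
Proof.
move=> hx hx' [hn hg h0] [_ hg' h0'].
have D : forall m j, n - j = m -> 0 < j -> j <= n -> fa x j = fa x' j.
  elim=> [|m IH] j hm hj0 hjn.
    have -> : j = n by lia.
    by rewrite (mf_top hx) (mf_top hx').
  have hjn' : j < n by lia.
  rewrite (hg j hj0 hjn') (hg' j hj0 hjn') (IH j.+1) //; lia.
apply: flag_ext => i hi; case: i hi => [|i] hi; last by apply: (D (n - i.+1)).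
have e1 : fa x 1 = fa x' 1 by apply: (D (n - 1)).
have hd1 : dim (fa x 1) = 1 := mf_dim hx hn.
have [d hd] := cards1P (introT eqP (del_dim1 HP hd1)).
move: h0 h0'; rewrite -e1 hd !in_set1 => /eqP -> /eqP -> //.
Qed.

Definition mfb x : bool := if excluded_middle_informative (mf x) then true else false.
Lemma mfbP x : reflect (mf x) (mfb x).
Proof. by rewrite /mfb; case: excluded_middle_informative => h; constructor. Qed.

Definition psi x := #|[set z | mfb z && flt x z]|.

Lemma psi_lt x y : mf x -> mf y -> flt x y -> psi y < psi x.
Proof.
move=> hx hy hxy; apply: proper_card; apply/properP; split.
  apply/subsetP=> z; rewrite !inE => /andP[hz hyz]; rewrite hz /=.
  by apply: (flt_trans hx hy (elimT (mfbP z) hz) hxy hyz).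
exists y; first by rewrite inE hxy andbT; apply/mfbP.
by rewrite inE; apply/negP=> /andP[_ h]; apply: (flt_irr h).
Qed.

Lemma largest_min x : mf x -> (forall y, mf y -> psi x <= psi y) -> flag_largest gam del x.
Proof.
move=> hx hmin y hy; case: (eqVneq y x) => [->|hne]; first by left.
case: (flt_total hy hx (elimN eqP hne)) => h; first by right.
by have := psi_lt hx hy h; rewrite ltnNge hmin.
Qed.

Lemma largest_n0 x : mf x -> n = 0 -> flag_largest gam del x.
Proof.
move=> hx hn y hy; left; apply: flag_ext => i hi.
have -> : i = n by lia.
by rewrite (mf_top hx) (mf_top hy).
Qed.

Lemma succ_or_L x : mf x -> (exists y, iss x y) \/ n = 0 \/ Lshape x.
Proof.
move=> hx; case: (sgs_pm x n) => hs.
- case: (posnP n) => hn; first by right; left.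
  have [y hy] := exist_nb hx (k := n.-1) ltac:(lia).
  by left; exists y; left.
- case: (classic (exists k, isl x k)) => [[k hk]|hno].
  + have [y hy] := exist_nb hx (k := k) ltac:(case: hk => ? _; lia).
    by left; exists y; right; split => //; exists k.
  + by right; right; apply: no_ll => // k hk; apply: hno; exists k.
Qed.

Lemma Last x : mf x -> (exists y, iss x y) \/ flag_largest gam del x.
Proof.
move=> hx; case: (succ_or_L hx) => [h|[h|hL]]; first by left.
  by right; apply: largest_n0.
right.
have hxb : mfb x by apply/mfbP.
case: (arg_minnP psi hxb) => z /mfbP hz hmin.
have hzmin : forall y, mf y -> psi z <= psi y by move=> y /mfbP; apply: hmin.
case: (succ_or_L hz) => [[y hy]|[hn|hL']].
- have [hy1 hy2] := succ_props hz hy.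
  by have := psi_lt hz hy1 hy2; rewrite ltnNge hzmin.
- by apply: largest_n0.
- have <- : z = x by apply: Lshape_uniq.
  exact: largest_min.
Qed.

Lemma R_imm_aux m : forall x, psi x <= m -> forall y, mf x -> iss x y ->
  forall z, mf z -> flt x z -> flt z y -> False.
Proof.
elim: m => [|m IH] x hm y hx hs z hz h1 h2.
  have := psi_lt hx hz h1; lia.
have [hy hxy] := succ_props hx hs.
pose Q w := mfb w && flt x w && flt w y.
have hQz : Q z by rewrite /Q h1 h2 !andbT; apply/mfbP.
case: (arg_minnP psi hQz) => w hQw hmin.
move: (hQw); rewrite /Q => /andP[/andP[hwb hxw] hwy]; have hw := elimT (mfbP w) hwb.
case: (Last hw) => [[w' hw']|hlarg]; last first.
  case: (hlarg y hy) => [e|h].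
    by subst y; apply: (flt_irr hwy).
  by apply: (flt_asym hw hy hwy h).
have [hw'1 hw'2] := succ_props hw hw'.
case: (eqVneq w' y) => [e|hne].
  subst w'; have e := succ_inj hw hx hw' hs; subst w.
  by apply: (flt_irr hxw).
case: (flt_total hw'1 hy (elimN eqP hne)) => h.
- have hQ : Q w'.
    by rewrite /Q h (flt_trans hx hw hw'1 hxw hw'2) !andbT; apply/mfbP.
  by have := hmin _ hQ; have := psi_lt hw hw'1 hw'2; lia.
- apply: (IH w _ w' hw hw' y hy hwy h).
  by have := psi_lt hx hw hxw; lia.
Qed.

Lemma main_fwd x y : mf x -> iss x y -> immediate_successor gam del x y.
Proof.
move=> hx hs; have [hy hxy] := succ_props hx hs.
split => //; split => // [[z [hz [h1 h2]]]].
exact: (R_imm_aux (leqnn _) hx hs hz h1 h2).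
Qed.

Lemma main_bwd x y : mf x -> ~ flag_largest gam del x ->
  immediate_successor gam del x y -> iss x y.
Proof.
move=> hx hnl [hy [hxy hno]].
case: (Last hx) => [[y' hy']|//].
have [hy'1 [hxy' hno']] := main_fwd hx hy'.
case: (eqVneq y y') => [->//|hne].
case: (flt_total hy hy'1 (elimN eqP hne)) => h.
- by exfalso; apply: hno'; exists y.
- by exfalso; apply: hno; exists y'.
Qed.

End Flags.

Theorem mainTheorem10 (F : finType) (dim : F -> nat) (gam : F -> F)
    (del : F -> {set F}) (HP : positive_opetope dim gam del)
    (top : F) (Htop : forall c, dim c <= dim top)
    (x : flag dim top) (Hx : max_flag gam del x)
    (Hnl : ~ flag_largest gam del x) :
  forall y : flag dim top,
    is_succ gam del x y <-> immediate_successor gam del x y.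
Proof.
move=> y; split => h.
- exact: (main_fwd HP Htop Hx h).
- exact: (main_bwd HP Htop Hx Hnl h).
Qed.
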